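(* For each $\mathfrak{t}\in\{\widetilde{\mathrm{I}},\mathrm{II},\mathrm{III},\widetilde{\mathrm{IV}}\}$, the stuffle product $*_{\mathfrak{t}}$ on $\mathfrak{A}^1_{\mathfrak{t}}$ is commutative and associative.
   Context: All algebras are over $\mathbb{Q}$; words are concatenation products of letters, $\mathbf{1}$ is the empty word. For a free algebra on a set of letters equipped with a commutative bilinear product $[\cdot,\cdot]$ on the span of the letters, the associated stuffle product $*$ is the bilinear product with $\mathbf{1}*u=u*\mathbf{1}=u$ and $(\alpha u)*(\beta v)=\alpha(u*\beta v)+\beta(\alpha u*v)+[\alpha,\beta](u*v)$ for letters $\alpha,\beta$ and words $u,v$. Type $\widetilde{\mathrm{I}}$: $\mathfrak{A}^1_{\widetilde{\mathrm{I}}}$ is the free algebra on letters $\theta$ and $z_k$ ($k\ge1$), with $[z_k,z_l]=z_{k+l}+z_{k+l-1}$, $[\theta,z_k]=[z_k,\theta]=z_{k+1}$, $[\theta,\theta]=z_2-\theta$; $*_{\widetilde{\mathrm{I}}}$ is the associated stuffle. Type II: $\mathfrak{A}^1_{\mathrm{II}}$ is the free algebra on letters $z'_k$ ($k\ge0$), with $[z'_k,z'_l]=z'_{k+l}$; $*_{\mathrm{II}}$ is the associated stuffle. Type III: let $B$ be the free algebra on letters $z_k$ ($k\in\mathbb{Z}$) with stuffle $*_B$ given by $[z_k,z_l]=z_{k+l}$. Let $\mathfrak{A}^1_{\mathrm{III}}$ be the $\mathbb{Q}$-span of the symbols $z'_kw$ ($k\in\mathbb{Z}$, $w$ a word in $B$).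 Set $\sigma_-(z'_nw):=z_nw-z_{n-1}w\in B$, and define bilinearly $z'_ku*_{\mathrm{III}}z'_lv:=z'_k\big(u*_B\sigma_-(z'_lv)\big)+z'_l\big(\sigma_-(z'_ku)*_Bv\big)+(z'_{k+l}-z'_{k+l-1})(u*_Bv)$. Type $\widetilde{\mathrm{IV}}$: let $C$ be the free algebra on letters $z'_k$ ($k\ge0$) with stuffle $*_C$ given by $[z'_k,z'_l]=z'_{k+l}$. Let $\mathfrak{A}^1_{\widetilde{\mathrm{IV}}}:=\mathbb{Q}\mathbf{1}\oplus\theta C\oplus\bigoplus_{k\ge1}z_kC$ (with new first-position symbols $\theta,z_k$). Put $\sigma_+(z_nw):=z'_nw+z'_{n-1}w\in C$. Define $*_{\widetilde{\mathrm{IV}}}$ bilinearly with unit $\mathbf{1}$ and, for $k,l\ge1$ and words $u,v\in C$: $z_ku*z_lv=z_k\big(u*_C\sigma_+(z_lv)\big)+z_l\big(\sigma_+(z_ku)*_Cv\big)+(z_{k+l}+z_{k+l-1})(u*_Cv)$; $z_ku*\theta v=\theta v*z_ku=z_k\big(u*_Cz'_1v\big)+\theta\big(\sigma_+(z_ku)*_Cv\big)+z_{k+1}(u*_Cv)$; $\theta u*\theta v=\theta\big(u*_Cz'_1v\big)+\theta\big(z'_1u*_Cv\big)+(z_2-\theta)(u*_Cv)$. *)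

(* Defs.v *)
From HB Require Import structures.
From mathcomp Require Import all_boot all_order all_algebra.
From mathcomp Require Import finmap.
From mathcomp.multinomials Require Import monalg.
Set Implicit Arguments. Unset Strict Implicit. Unset Printing Implicit Defensive.
Import GRing.Theory.
Local Open Scope ring_scope.

Definition QA (K : choiceType) := {malg rat[K]}.

Definition lin (K K' : choiceType) (f : K -> QA K') (p : QA K) : QA K' :=
  \sum_(x <- msupp p) p@_x *: f x.

Definition bilin (K K' : choiceType) (f : K -> K -> QA K') (p q : QA K) : QA K' :=
  lin (fun x => lin (f x) q) p.

Definition pre (L : choiceType) (a : L) (p : QA (seq L)) : QA (seq L) :=
  lin (fun w => << a :: w >>) p.

(* Generic stuffle on words over the letters L; the commutative bracket
   [a,b] of two letters is given as a list of (coefficient, letter) pairs,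
   i.e. [a,b] = \sum_(c <- br a b) c.1 * c.2. *)
Fixpoint stw (L : choiceType) (br : L -> L -> seq (rat * L)%type) (u : seq L)
  : seq L -> QA (seq L) :=
  match u with
  | [::] => fun v => << v >>
  | a :: u' =>
      fix stu (v : seq L) : QA (seq L) :=
        match v with
        | [::] => << a :: u' >>
        | b :: v' => pre a (stw br u' v) + pre b (stu v')
                     + \sum_(c <- br a b) c.1 *: pre c.2 (stw br u' v')
        end
  end.

Definition stuffle (L : choiceType) (br : L -> L -> seq (rat * L)%type) :=
  bilin (stw br).

(* Letters theta and z_k (k >= 1).  zS n denotes the letter z_(n+1).   *)
Inductive letI := thetaI | zS of nat.

Definition letI_enc (a : letI) : option nat :=
  match a with thetaI => None | zS n => Some n end.
Definition letI_dec (o : option nat) : letI :=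
  match o with None => thetaI | Some n => zS n end.
Lemma letI_encK : cancel letI_enc letI_dec. Proof. by case. Qed.
HB.instance Definition _ := Countable.copy letI (can_type letI_encK).

(* [z_k,z_l] = z_(k+l) + z_(k+l-1), [theta,z_k] = z_(k+1),
   [theta,theta] = z_2 - theta *)
Definition brI (a b : letI) : seq (rat * letI)%type :=
  match a, b with
  | zS k, zS l => [:: (1, zS (k + l).+1); (1, zS (k + l))]
  | thetaI, zS k | zS k, thetaI => [:: (1, zS k.+1)]
  | thetaI, thetaI => [:: (1, zS 1); (-1, thetaI)]
  end.
Definition AI := QA (seq letI).
Definition stuffleI : AI -> AI -> AI := stuffle brI.

Definition brN (k l : nat) : seq (rat * nat)%type := [:: (1, k + l)].
Definition AII := QA (seq nat).
Definition stuffleII : AII -> AII -> AII := stuffle brN.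

Definition brB (k l : int) : seq (rat * int)%type := [:: (1, k + l)].
Definition AB := QA (seq int).
Definition stuffleB : AB -> AB -> AB := stuffle brB.
(* basis element (k, w) of A_III stands for the symbol z'_k w *)
Definition AIII := QA (int * seq int)%type.
Definition preIII (k : int) (p : AB) : AIII := lin (fun w => << (k, w) >>) p.
Definition sigma_minus (x : (int * seq int)%type) : AB :=
  << x.1 :: x.2 >> - << (x.1 - 1) :: x.2 >>.
Definition stIII_basis (x y : (int * seq int)%type) : AIII :=
  let: (k, u) := x in let: (l, v) := y in
  preIII k (stuffleB << u >> (sigma_minus y))
  + preIII l (stuffleB (sigma_minus x) << v >>)
  + (preIII (k + l) (stuffleB << u >> << v >>)
     - preIII (k + l - 1) (stuffleB << u >> << v >>)).
Definition stuffleIII : AIII -> AIII -> AIII := bilin stIII_basis.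

Definition AC := QA (seq nat).
Definition stuffleC : AC -> AC -> AC := stuffle brN.
(* basis of A_IV~ : None stands for 1, Some (a, w) for the symbol a w with
   a in {theta, z_k (k>=1)} and w a word in C *)
Definition AIV := QA (option (letI * seq nat)%type).
Definition preIV (a : letI) (p : AC) : AIV := lin (fun w => << Some (a, w) >>) p.
(* sigma_+(z_(n+1) w) = z'_(n+1) w + z'_n w *)
Definition sigma_plus (n : nat) (w : seq nat) : AC := << n.+1 :: w >> + << n :: w >>.
Definition stIV_basis (x y : option (letI * seq nat)%type) : AIV :=
  match x, y with
  | None, _ => << y >>
  | _, None => << x >>
  | Some (zS k, u), Some (zS l, v) =>
      preIV (zS k) (stuffleC << u >> (sigma_plus l v))
      + preIV (zS l) (stuffleC (sigma_plus k u) << v >>)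
      + (preIV (zS (k + l).+1) (stuffleC << u >> << v >>)
         + preIV (zS (k + l)) (stuffleC << u >> << v >>))
  | Some (zS k, u), Some (thetaI, v) | Some (thetaI, v), Some (zS k, u) =>
      preIV (zS k) (stuffleC << u >> << 1%N :: v >>)
      + preIV thetaI (stuffleC (sigma_plus k u) << v >>)
      + preIV (zS k.+1) (stuffleC << u >> << v >>)
  | Some (thetaI, u), Some (thetaI, v) =>
      preIV thetaI (stuffleC << u >> << 1%N :: v >>)
      + preIV thetaI (stuffleC << 1%N :: u >> << v >>)
      + (preIV (zS 1) (stuffleC << u >> << v >>)
         - preIV thetaI (stuffleC << u >> << v >>))
  end.
Definition stuffleIV : AIV -> AIV -> AIV := bilin stIV_basis.

(* Main.v *)
Require Import Defs.
From HB Require Import structures.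
From mathcomp Require Import all_boot all_order all_algebra.
From mathcomp Require Import finmap.
From mathcomp.multinomials Require Import monalg.
From mathcomp Require Import ssrAC zify.
Set Implicit Arguments. Unset Strict Implicit. Unset Printing Implicit Defensive.
Import GRing.Theory.
Local Open Scope ring_scope.

Section LinAlg.

Definition islin (K K' : choiceType) (F : QA K -> QA K') :=
  forall (c : rat) p q, F (c *: p + q) = c *: F p + F q.

Variables K K' K'' : choiceType.
Implicit Types (F G : QA K -> QA K') (p q : QA K).

Lemma islin0 F : islin F -> F 0 = 0.
Proof.
move=> h; have := h 1 0 0; rewrite !scale1r addr0 => e.
by apply: (addrI (F 0)); rewrite addr0 -e.
Qed.

Lemma islinD F p q : islin F -> F (p + q) = F p + F q.
Proof. by move=> h; have := h 1 p q; rewrite !scale1r. Qed.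

Lemma islinZ F c p : islin F -> F (c *: p) = c *: F p.
Proof. by move=> h; have := h c p 0; rewrite addr0 (islin0 h) addr0. Qed.

Lemma islinN F p : islin F -> F (- p) = - F p.
Proof. by move=> h; rewrite -scaleN1r islinZ // scaleN1r. Qed.

Lemma islinB F p q : islin F -> F (p - q) = F p - F q.
Proof. by move=> h; rewrite islinD // islinN. Qed.

Lemma islin_sum F (I : Type) (r : seq I) (G : I -> QA K) :
  islin F -> F (\sum_(i <- r) G i) = \sum_(i <- r) F (G i).
Proof.
move=> h; elim: r => [|i r IH]; first by rewrite !big_nil islin0.
by rewrite !big_cons islinD // IH.
Qed.

Lemma basisZ (c : rat) (x : K) : << c *g x >> = c *: (<< x >> : QA K).
Proof. by apply/malgP => k; rewrite mcoeffZ !mcoeffU mulr_natr. Qed.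

Lemma malgE' p : p = \sum_(x <- msupp p) p@_x *: << x >>.
Proof. by rewrite {1}(monalgE p); apply: eq_bigr => x _; rewrite basisZ. Qed.

Lemma linEw (f : K -> QA K') p (d : {fset K}) : (msupp p `<=` d)%fset ->
  lin f p = \sum_(x <- d) p@_x *: f x.
Proof.
move=> sub; rewrite /lin; apply: big_fset_incl => // x _ xn.
by rewrite mcoeff_outdom // scale0r.
Qed.

Lemma islin_lin (f : K -> QA K') : islin (lin f).
Proof.
move=> c p q.
set d := (msupp p `|` msupp q `|` msupp (c *: p + q))%fset.
have s1 : (msupp p `<=` d)%fset by rewrite /d -fsetUA fsubsetUl.
have s2 : (msupp q `<=` d)%fset by rewrite /d fsetUC fsetUA fsubsetUr.
have s3 : (msupp (c *: p + q) `<=` d)%fset by rewrite /d fsubsetUr.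
rewrite (linEw f s1) (linEw f s2) (linEw f s3) scaler_sumr -big_split /=.
by apply: eq_bigr => x _; rewrite mcoeffD mcoeffZ scalerDl scalerA.
Qed.

Lemma linU (f : K -> QA K') x : lin f << x >> = f x.
Proof.
rewrite /lin msuppU oner_eq0 big_seq_fset1 mcoeffUU scale1r //.
Qed.

Lemma eq_lin (f g : K -> QA K') p : (forall x, f x = g x) -> lin f p = lin g p.
Proof. by move=> h; apply: eq_bigr => x _; rewrite h. Qed.

Lemma islinE F p : islin F -> F p = lin (fun x => F << x >>) p.
Proof.
move=> h; rewrite {1}(malgE' p) islin_sum //.
by apply: eq_bigr => x _; rewrite islinZ.
Qed.

Lemma lin_ext F G p : islin F -> islin G -> (forall x, F << x >> = G << x >>) ->
  F p = G p.
Proof. by move=> hF hG e; rewrite (islinE p hF) (islinE p hG); apply: eq_lin. Qed.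

Lemma islin_lin2 (F : K -> QA K' -> QA K'') p : (forall x, islin (F x)) ->
  islin (fun r : QA K' => lin (fun x => F x r) p).
Proof.
move=> h c q1 q2; rewrite /lin scaler_sumr -big_split /=.
by apply: eq_bigr => x _; rewrite h scalerDr !scalerA mulrC.
Qed.

Lemma lin_id p : lin (fun x => << x >>) p = p.
Proof. by rewrite [RHS]malgE'. Qed.

Lemma lin_coef (f : K -> QA K') p y :
  (lin f p)@_y = \sum_(x <- msupp p) p@_x * (f x)@_y.
Proof. by rewrite /lin raddf_sum; apply: eq_bigr => x _; exact: mcoeffZ. Qed.

Lemma sum_delta p y : \sum_(x <- msupp p) p@_x *+ (x == y) = p@_y.
Proof. by rewrite {3}(monalgE p) raddf_sum; apply: eq_bigr => x _; symmetry; exact: mcoeffU. Qed.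

Lemma lin_inj_coef (h : K -> K') p z : injective h ->
  (lin (fun x => << h x >>) p)@_(h z) = p@_z.
Proof.
move=> hi; rewrite lin_coef -sum_delta; apply: eq_bigr => x _.
by rewrite mcoeffU (inj_eq hi) mulr_natr.
Qed.

Lemma bilinU (f : K -> K -> QA K') x y : bilin f << x >> << y >> = f x y.
Proof. by rewrite /bilin !linU. Qed.

Lemma islin_bilinl (f : K -> K -> QA K') q : islin (fun p => bilin f p q).
Proof. exact: islin_lin. Qed.

End LinAlg.

Lemma islin_bilinr (K K' : choiceType) (f : K -> K -> QA K') p : islin (bilin f p).
Proof. exact: (islin_lin2 (F := fun x r => lin (f x) r) p (fun x => islin_lin (f x))). Qed.


Lemma comb3 (V : lmodType rat) (c : rat) (a1 b1 a2 b2 a3 b3 : V) :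
  (c *: a1 + b1) + (c *: a2 + b2) + (c *: a3 + b3) =
  c *: (a1 + a2 + a3) + (b1 + b2 + b3).
Proof. by rewrite !scalerDr [LHS](AC (2*2*2) (1*3*5*(2*4*6))). Qed.

Lemma comb2 (V : lmodType rat) (c : rat) (a1 b1 a2 b2 : V) :
  (c *: a1 + b1) + (c *: a2 + b2) = c *: (a1 + a2) + (b1 + b2).
Proof. by rewrite !scalerDr [LHS](AC (2*2) (1*3*(2*4))). Qed.

Lemma perm9 (V : zmodType) (a1 q1 r1 a2 q2 r2 a3 q3 r3 : V) :
  (a1 + q1 + r1) + (a2 + q2 + r2) + (a3 + q3 + r3) =
  a1 + a2 + a3 + (q1 + q2 + q3) + r1 + r2 + r3.
Proof. by rewrite [LHS](AC (3*3*3) (1*4*7*(2*5*8)*3*6*9)). Qed.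

Lemma islin_id (K : choiceType) : islin (fun p : QA K => p).
Proof. by []. Qed.

Fact preL_key : unit. Proof. by []. Qed.
Definition preL (L : choiceType) := locked_with preL_key
  (fun (P : QA L) (X : QA (seq L)) => lin (fun c => pre c X) P).
Lemma preLE (L : choiceType) P X : @preL L P X = lin (fun c => pre c X) P.
Proof. by rewrite /preL unlock. Qed.

Fact sst_key : unit. Proof. by []. Qed.
Definition sst (L : choiceType) br := locked_with sst_key (@stuffle L br).
Lemma sstE (L : choiceType) br : @sst L br = stuffle br.
Proof. by rewrite /sst unlock. Qed.

Definition brl (L : choiceType) (br : L -> L -> seq (rat * L)%type) (a b : L) : QA L :=
  \sum_(c <- br a b) c.1 *: << c.2 >>.
Fact brp_key : unit. Proof. by []. Qed.
Definition brp (L : choiceType) br := locked_with brp_key (bilin (@brl L br)).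
Lemma brpE (L : choiceType) br : @brp L br = bilin (brl br).
Proof. by rewrite /brp unlock. Qed.

Section Stuffle.
Variable L : choiceType.
Variable br : L -> L -> seq (rat * L)%type.
Local Notation W := (seq L).
Local Notation st := (sst br).
Local Notation brp := (brp br).
Local Notation brl := (brl br).
Local Notation preL := (@preL L).

Implicit Types (P Q : QA L) (X Y Z M R : QA W) (c : rat) (a b : L) (u v w : W).

Lemma stZDl c X1 X2 Y : st (c *: X1 + X2) Y = c *: st X1 Y + st X2 Y.
Proof. rewrite !sstE; exact: islin_bilinl. Qed.
Lemma stZDr c X Y1 Y2 : st X (c *: Y1 + Y2) = c *: st X Y1 + st X Y2.
Proof. rewrite !sstE; exact: islin_bilinr. Qed.
Lemma brpZDl c P1 P2 Q : brp (c *: P1 + P2) Q = c *: brp P1 Q + brp P2 Q.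
Proof. rewrite !brpE; exact: islin_bilinl. Qed.
Lemma brpZDr c P Q1 Q2 : brp P (c *: Q1 + Q2) = c *: brp P Q1 + brp P Q2.
Proof. rewrite !brpE; exact: islin_bilinr. Qed.
Lemma islin_pre a : islin (pre a).
Proof. exact: islin_lin. Qed.
Lemma preZD a c X1 X2 : pre a (c *: X1 + X2) = c *: pre a X1 + pre a X2.
Proof. exact: islin_pre. Qed.
Lemma preLZDl c P1 P2 X : preL (c *: P1 + P2) X = c *: preL P1 X + preL P2 X.
Proof. rewrite !preLE; exact: islin_lin. Qed.
Lemma islin_preLr P : islin (preL P).
Proof.
have := (@islin_lin2 L W W (fun x r => pre x r) P islin_pre).
by move=> h c X1 X2; rewrite !preLE; exact: h.
Qed.
Lemma preLZDr c P X1 X2 : preL P (c *: X1 + X2) = c *: preL P X1 + preL P X2.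
Proof. exact: islin_preLr. Qed.

Lemma islin_stl Y : islin (fun X => st X Y).
Proof. by move=> c X1 X2; rewrite stZDl. Qed.
Lemma islin_str X : islin (st X).
Proof. by move=> c X1 X2; rewrite stZDr. Qed.
Lemma islin_preLl X : islin (fun P => preL P X).
Proof. by move=> c X1 X2; rewrite preLZDl. Qed.
Lemma islin_brpl Q : islin (fun P => brp P Q).
Proof. by move=> c X1 X2; rewrite brpZDl. Qed.
Lemma islin_brpr P : islin (brp P).
Proof. by move=> c X1 X2; rewrite brpZDr. Qed.

Lemma stDl X1 X2 Y : st (X1 + X2) Y = st X1 Y + st X2 Y.
Proof. exact: (islinD _ _ (islin_stl _)). Qed.
Lemma stDr X Y1 Y2 : st X (Y1 + Y2) = st X Y1 + st X Y2.
Proof. exact: (islinD _ _ (islin_str _)). Qed.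
Lemma preLDl P1 P2 X : preL (P1 + P2) X = preL P1 X + preL P2 X.
Proof. exact: (islinD _ _ (islin_preLl _)). Qed.
Lemma preLDr P X1 X2 : preL P (X1 + X2) = preL P X1 + preL P X2.
Proof. exact: (islinD _ _ (islin_preLr _)). Qed.
Lemma preLBl P1 P2 X : preL (P1 - P2) X = preL P1 X - preL P2 X.
Proof. exact: (islinB _ _ (islin_preLl _)). Qed.
Lemma preLBr P X1 X2 : preL P (X1 - X2) = preL P X1 - preL P X2.
Proof. exact: (islinB _ _ (islin_preLr _)). Qed.
Lemma brpDl P1 P2 Q : brp (P1 + P2) Q = brp P1 Q + brp P2 Q.
Proof. exact: (islinD _ _ (islin_brpl _)). Qed.
Lemma brpNl P Q : brp (- P) Q = - brp P Q.
Proof. exact: (islinN _ (islin_brpl _)). Qed.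
Lemma brpNr P Q : brp P (- Q) = - brp P Q.
Proof. exact: (islinN _ (islin_brpr _)). Qed.
Lemma brpDr P Q1 Q2 : brp P (Q1 + Q2) = brp P Q1 + brp P Q2.
Proof. exact: (islinD _ _ (islin_brpr _)). Qed.
Lemma brpBl P1 P2 Q : brp (P1 - P2) Q = brp P1 Q - brp P2 Q.
Proof. exact: (islinB _ _ (islin_brpl _)). Qed.
Lemma brpBr P Q1 Q2 : brp P (Q1 - Q2) = brp P Q1 - brp P Q2.
Proof. exact: (islinB _ _ (islin_brpr _)). Qed.

Lemma preU a w : pre a << w >> = << a :: w >>.
Proof. exact: linU. Qed.
Lemma preLU a X : preL << a >> X = pre a X.
Proof. rewrite preLE; exact: linU. Qed.
Lemma stU u v : st << u >> << v >> = stw br u v.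
Proof. rewrite sstE; exact: bilinU. Qed.
Lemma brpU a b : brp << a >> << b >> = brl a b.
Proof. rewrite brpE; exact: bilinU. Qed.

Lemma brsum a b X :
  \sum_(c <- br a b) c.1 *: pre c.2 X = preL (brl a b) X.
Proof.
rewrite preLE /brl islin_sum; last exact: islin_lin.
by apply: eq_bigr => c _; rewrite islinZ ?linU //; exact: islin_lin.
Qed.

Lemma stw_cons a u b v : stw br (a :: u) (b :: v) =
  pre a (stw br u (b :: v)) + pre b (stw br (a :: u) v)
  + preL (brl a b) (stw br u v).
Proof. by rewrite -brsum. Qed.

Lemma stw_nilr u : stw br u [::] = << u >>.
Proof. by case: u. Qed.

Lemma st1l X : st << [::] >> X = X.
Proof.
apply: (lin_ext (F := st << [::] >>) (G := fun p => p)).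
- exact: islin_str.
- exact: islin_id.
- by move=> x; rewrite stU.
Qed.

Lemma st1r X : st X << [::] >> = X.
Proof.
apply: (lin_ext (F := fun p => st p << [::] >>) (G := fun p => p)).
- exact: islin_stl.
- exact: islin_id.
- by move=> x; rewrite stU stw_nilr.
Qed.

Ltac linsolve :=
  let c := fresh "c" in let p := fresh "p" in let q := fresh "q" in
  move=> c p q /=;
  rewrite ?(preLZDl, preLZDr, stZDl, stZDr, brpZDl, brpZDr, preZD);
  rewrite ?comb3 ?comb2.

Lemma KF P Q X Y :
  st (preL P X) (preL Q Y) =
  preL P (st X (preL Q Y)) + preL Q (st (preL P X) Y) + preL (brp P Q) (st X Y).
Proof.
move: P Q X Y.
have step : forall P Q X Y, st (preL P X) (preL Q Y) =
  preL P (st X (preL Q Y)) + preL Q (st (preL P X) Y) + preL (brp P Q) (st X Y).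
  move=> P Q X Y.
  apply: (lin_ext (F := fun P => st (preL P X) (preL Q Y))
     (G := fun P => preL P (st X (preL Q Y)) + preL Q (st (preL P X) Y)
                    + preL (brp P Q) (st X Y))); try by linsolve.
  move=> a.
  apply: (lin_ext (F := fun Q => st (preL << a >> X) (preL Q Y))
     (G := fun Q => preL << a >> (st X (preL Q Y)) + preL Q (st (preL << a >> X) Y)
                    + preL (brp << a >> Q) (st X Y))); try by linsolve.
  move=> b.
  apply: (lin_ext (F := fun X => st (preL << a >> X) (preL << b >> Y))
     (G := fun X => preL << a >> (st X (preL << b >> Y)) + preL << b >> (st (preL << a >> X) Y)
                    + preL (brp << a >> << b >>) (st X Y))); try by linsolve.
  move=> u.
  apply: (lin_ext (F := fun Y => st (preL << a >> << u >>) (preL << b >> Y))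
     (G := fun Y => preL << a >> (st << u >> (preL << b >> Y)) + preL << b >> (st (preL << a >> << u >>) Y)
                    + preL (brp << a >> << b >>) (st << u >> Y))); try by linsolve.
  move=> v.
  by rewrite !preLU !preU !stU brpU stw_cons.
exact: step.
Qed.

Lemma stM_r P1 P2 P3 M1 M2 M3 M Q Z R :
  M = preL P1 M1 + preL P2 M2 + preL P3 M3 -> R = preL Q Z ->
  st M R = preL P1 (st M1 R) + preL P2 (st M2 R) + preL P3 (st M3 R)
    + preL Q (st M Z) + preL (brp P1 Q) (st M1 Z) + preL (brp P2 Q) (st M2 Z)
    + preL (brp P3 Q) (st M3 Z).
Proof.
move=> eM eR. rewrite {1}eM !stDl eR (KF P1 Q M1 Z) (KF P2 Q M2 Z) (KF P3 Q M3 Z) -eR eM !stDl !preLDr.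
exact: perm9.
Qed.

Lemma stM_l P1 P2 P3 M1 M2 M3 M Q Z R :
  M = preL P1 M1 + preL P2 M2 + preL P3 M3 -> R = preL Q Z ->
  st R M = preL Q (st Z M) + preL P1 (st R M1) + preL P2 (st R M2)
    + preL P3 (st R M3) + preL (brp Q P1) (st Z M1) + preL (brp Q P2) (st Z M2)
    + preL (brp Q P3) (st Z M3).
Proof.
move=> eM eR; rewrite {1}eM !stDr eR (KF Q P1 Z M1) (KF Q P2 Z M2) (KF Q P3 Z M3) -eR eM !stDr !preLDr.
by rewrite [LHS](AC (3*3*3) ((1*4*7)*2*5*8*3*6*9)).
Qed.

Hypothesis brC : forall a b, brl a b = brl b a.

Lemma stw_comm n u v : (size u + size v <= n)%N -> stw br u v = stw br v u.
Proof.
elim: n u v => [|n IH] u v hs.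
  by move: hs; rewrite leqn0 addn_eq0 !size_eq0 => /andP[/eqP-> /eqP->].
case: u hs => [|a u] hs; first by rewrite stw_nilr.
case: v hs => [|b v] hs; first by rewrite stw_nilr.
move: hs; rewrite [size _]/= [size (b :: v)]/= addSn addnS ltnS => hs.
rewrite (stw_cons a u b v) (stw_cons b v a u) brC.
rewrite (IH u (b :: v)); last by rewrite [size _]/= addnS.
rewrite (IH (a :: u) v); last by rewrite [size _]/= addSn.
rewrite (IH u v); last by apply: leq_trans hs; rewrite leqnSn.
by rewrite [pre a _ + _]addrC.
Qed.

Lemma sst_comm : commutative st.
Proof.
move=> p q.
apply: (lin_ext (F := fun p => st p q) (G := fun p => st q p)); try by linsolve.
move=> u.
apply: (lin_ext (F := fun q => st << u >> q) (G := fun q => st q << u >>)); try by linsolve.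
move=> v; rewrite !stU; exact: (stw_comm (leqnn _)).
Qed.

Hypothesis brA : forall a b (d : L), brp (brl a b) << d >> = brp << a >> (brl b d).

Lemma st_assoc_words n u v w : (size u + size v + size w <= n)%N ->
  st (st << u >> << v >>) << w >> = st << u >> (st << v >> << w >>).
Proof.
elim: n u v w => [|n IH] u v w hs.
  by move: hs; rewrite leqn0 !addn_eq0 !size_eq0 => /andP[/andP[/eqP-> /eqP->] /eqP->]; rewrite !st1l.
case: u hs => [|a u] hs; first by rewrite !st1l.
case: v hs => [|b v] hs; first by rewrite st1r st1l.
case: w hs => [|c w] hs; first by rewrite !st1r.
have eA : << a :: u >> = preL << a >> << u >> by rewrite preLU preU.
have eB : << b :: v >> = preL << b >> << v >> by rewrite preLU preU.
have eC : << c :: w >> = preL << c >> << w >> by rewrite preLU preU.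
have eAB : st << a :: u >> << b :: v >> = preL << a >> (st << u >> << b :: v >>)
   + preL << b >> (st << a :: u >> << v >>) + preL (brp << a >> << b >>) (st << u >> << v >>).
  by rewrite {1}eA {1}eB KF -eA -eB.
have eBC : st << b :: v >> << c :: w >> = preL << b >> (st << v >> << c :: w >>)
   + preL << c >> (st << b :: v >> << w >>) + preL (brp << b >> << c >>) (st << v >> << w >>).
  by rewrite {1}eB {1}eC KF -eB -eC.
rewrite (stM_r eAB eC) (stM_l eBC eA).
rewrite (IH u (b :: v) (c :: w)); last by move: hs; rewrite /=; lia.
rewrite (IH (a :: u) v (c :: w)); last by move: hs; rewrite /=; lia.
rewrite (IH u v (c :: w)); last by move: hs; rewrite /=; lia.
rewrite (IH (a :: u) (b :: v) w); last by move: hs; rewrite /=; lia.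
rewrite (IH u (b :: v) w); last by move: hs; rewrite /=; lia.
rewrite (IH (a :: u) v w); last by move: hs; rewrite /=; lia.
rewrite (IH u v w); last by move: hs; rewrite /=; lia.
rewrite !brpU brA.
by rewrite [LHS](AC 7 (1*2*4*6*3*5*7)).
Qed.

Lemma sst_assoc : associative st.
Proof.
move=> p q r.
apply: (lin_ext (F := fun p => st p (st q r)) (G := fun p => st (st p q) r)); try by linsolve.
move=> u.
apply: (lin_ext (F := fun q => st << u >> (st q r)) (G := fun q => st (st << u >> q) r)); try by linsolve.
move=> v.
apply: (lin_ext (F := fun r => st << u >> (st << v >> r)) (G := fun r => st (st << u >> << v >>) r)); try by linsolve.
move=> w; symmetry; exact: (st_assoc_words (leqnn _)).
Qed.

End Stuffle.

Lemma sst_stuffle (L : choiceType) br : @sst L br = stuffle br.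
Proof. exact: sstE. Qed.

Lemma brlN a b : brl brN a b = << (a + b)%N >>.
Proof. by rewrite /brl big_cons big_nil scale1r addr0. Qed.

Lemma brN_comm a b : brl brN a b = brl brN b a.
Proof. by rewrite !brlN addnC. Qed.

Lemma brN_assoc a b d : brp brN (brl brN a b) << d >> = brp brN << a >> (brl brN b d).
Proof. by rewrite !brlN !brpU !brlN addnA. Qed.

Lemma stN_comm : commutative (stuffle brN).
Proof. by have := sst_comm brN_comm; rewrite sstE. Qed.
Lemma stN_assoc : associative (stuffle brN).
Proof. by have := sst_assoc brN_assoc; rewrite sstE. Qed.

Lemma brlB a b : brl brB a b = << a + b >>.
Proof. by rewrite /brl big_cons big_nil scale1r addr0. Qed.
Lemma brB_comm a b : brl brB a b = brl brB b a.
Proof. by rewrite !brlB addrC. Qed.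
Lemma brB_assoc a b d : brp brB (brl brB a b) << d >> = brp brB << a >> (brl brB b d).
Proof. by rewrite !brlB !brpU !brlB addrA. Qed.
Lemma stB_comm : commutative stuffleB.
Proof. by have := sst_comm brB_comm; rewrite sstE. Qed.
Lemma stB_assoc : associative stuffleB.
Proof. by have := sst_assoc brB_assoc; rewrite sstE. Qed.

Lemma brlI_zz k l : brl brI (zS k) (zS l) = << zS (k + l).+1 >> + << zS (k + l) >>.
Proof. by rewrite /brl big_cons big_cons big_nil !scale1r addr0. Qed.
Lemma brlI_tz k : brl brI thetaI (zS k) = << zS k.+1 >>.
Proof. by rewrite /brl big_cons big_nil !scale1r addr0. Qed.
Lemma brlI_zt k : brl brI (zS k) thetaI = << zS k.+1 >>.
Proof. by rewrite /brl big_cons big_nil !scale1r addr0. Qed.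
Lemma brlI_tt : brl brI thetaI thetaI = << zS 1 >> - << thetaI >>.
Proof. by rewrite /brl big_cons big_cons big_nil scale1r scaleN1r addr0. Qed.

Definition brlIE := (brlI_zz, brlI_tz, brlI_zt, brlI_tt).

Lemma brI_comm a b : brl brI a b = brl brI b a.
Proof. by case: a => [|k]; case: b => [|l]; rewrite ?brlIE // addnC. Qed.

Lemma brI_assoc a b d : brp brI (brl brI a b) << d >> = brp brI << a >> (brl brI b d).
Proof.
case: a => [|k]; case: b => [|l]; case: d => [|m];
  rewrite !brlIE ?(brpDl, brpNl, brpDr, brpNr) !brpU !brlIE;
  by rewrite ?add0n ?addSn ?addnS ?addnA ?addn0 ?addrK.
Qed.

Lemma stI_comm : commutative stuffleI.
Proof. by have := sst_comm brI_comm; rewrite sstE. Qed.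
Lemma stI_assoc : associative stuffleI.
Proof. by have := sst_assoc brI_assoc; rewrite sstE. Qed.

Lemma islin_comp (K1 K2 K3 : choiceType) (F : QA K2 -> QA K3) (G : QA K1 -> QA K2) :
  islin F -> islin G -> islin (fun p => F (G p)).
Proof. by move=> hF hG c p q; rewrite hG hF. Qed.

Lemma lin_fB (K K' : choiceType) (f g : K -> QA K') p :
  lin (fun x => f x - g x) p = lin f p - lin g p.
Proof. by rewrite /lin -sumrB; apply: eq_bigr => x _; rewrite scalerBr. Qed.

Lemma lin_fD (K K' : choiceType) (f g : K -> QA K') p :
  lin (fun x => f x + g x) p = lin f p + lin g p.
Proof. by rewrite /lin -big_split; apply: eq_bigr => x _; rewrite scalerDr. Qed.

Lemma transfer_inj (K K' : choiceType) (F : QA K -> QA K') :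
  islin F -> (forall p, F p = 0 -> p = 0) -> injective F.
Proof.
move=> hF h0 p q e; apply/eqP; rewrite -subr_eq0; apply/eqP; apply: h0.
by rewrite islinB // e subrr.
Qed.

Lemma transfer_comm (K K' : choiceType) (F : QA K -> QA K') (m : QA K -> QA K -> QA K)
  (m' : QA K' -> QA K' -> QA K') :
  injective F -> (forall p q, F (m p q) = m' (F p) (F q)) -> commutative m' ->
  commutative m.
Proof. by move=> hi hm hc p q; apply: hi; rewrite !hm hc. Qed.

Lemma transfer_assoc (K K' : choiceType) (F : QA K -> QA K') (m : QA K -> QA K -> QA K)
  (m' : QA K' -> QA K' -> QA K') :
  injective F -> (forall p q, F (m p q) = m' (F p) (F q)) -> associative m' ->
  associative m.
Proof. by move=> hi hm ha p q r; apply: hi; rewrite !hm ha. Qed.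

Fact sig3_key : unit. Proof. by []. Qed.
Definition sig3 : AIII -> AB := locked_with sig3_key (lin sigma_minus).
Lemma sig3E : sig3 = lin sigma_minus. Proof. by rewrite /sig3 unlock. Qed.

Lemma islin_sig3 : islin sig3.
Proof. rewrite sig3E; exact: islin_lin. Qed.

Lemma sig3U x : sig3 << x >> = sigma_minus x.
Proof. by rewrite sig3E linU. Qed.

Lemma islin_preIII k : islin (preIII k).
Proof. exact: islin_lin. Qed.

Definition Pm (k : int) : QA int := << k >> - << k - 1 >>.

Lemma sig3_pre k M : sig3 (preIII k M) = preL (Pm k) M.
Proof.
apply: (lin_ext (F := fun M => sig3 (preIII k M)) (G := preL (Pm k))).
- exact: islin_comp islin_sig3 (islin_preIII k).
- exact: islin_preLr.
- move=> w; rewrite /preIII linU sig3U /Pm preLBl !preLU !preU //.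
Qed.

Lemma sigma_minusE k u : sigma_minus (k, u) = preL (Pm k) << u >>.
Proof. by rewrite /Pm preLBl !preLU !preU. Qed.

Lemma brpPm k l : brp brB (Pm k) (Pm l) =
  (<< k + l >> - << k + l - 1 >>) - (<< k + l - 1 >> - << k + l - 1 - 1 >>).
Proof.
rewrite /Pm brpBl !brpBr !brpU !brlB.
by rewrite [k + (l - 1)]addrA [k - 1 + l]addrAC [k - 1 + (l - 1)]addrA [k - 1 + l]addrAC.
Qed.

Lemma sig3_basis x y : sig3 (stIII_basis x y) = sst brB (sig3 << x >>) (sig3 << y >>).
Proof.
case: x => k u; case: y => l v.
rewrite !sig3U !sigma_minusE KF brpPm /stIII_basis.
rewrite !(islinD _ _ islin_sig3) !(islinN _ islin_sig3).
rewrite /stuffleB -(sstE brB).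
rewrite {1}(sig3_pre k) {1}(sig3_pre l) {1}(sig3_pre (k + l)) {1}(sig3_pre (k + l - 1)).
rewrite {1}(sigma_minusE l v) {1}(sigma_minusE k u).
congr (_ + _).
by rewrite -preLBl.
Qed.

Lemma sig3_hom p q : sig3 (stuffleIII p q) = sst brB (sig3 p) (sig3 q).
Proof.
apply: (lin_ext (F := fun p => sig3 (stuffleIII p q)) (G := fun p => sst brB (sig3 p) (sig3 q))).
- exact: islin_comp islin_sig3 (islin_bilinl _ _).
- exact: islin_comp (islin_stl _ _) islin_sig3.
move=> x.
apply: (lin_ext (F := fun q => sig3 (stuffleIII << x >> q)) (G := fun q => sst brB (sig3 << x >>) (sig3 q))).
- exact: islin_comp islin_sig3 (islin_bilinr _ _).
- exact: islin_comp (islin_str _ _) islin_sig3.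
move=> y; rewrite /stuffleIII bilinU; exact: sig3_basis.
Qed.

Definition h1III (x : int * seq int) : seq int := x.1 :: x.2.
Definition h2III (x : int * seq int) : seq int := (x.1 - 1) :: x.2.
Lemma h1III_inj : injective h1III.
Proof. by move=> [a b] [c d] [-> ->]. Qed.
Lemma h2III_inj : injective h2III.
Proof. by move=> [a b] [c d] [/addIr -> ->]. Qed.

Lemma sig3_coef p k w : (sig3 p)@_(k :: w) = p@_(k, w) - p@_(k + 1, w).
Proof.
have -> : sig3 p = lin (fun x => << h1III x >>) p - lin (fun x => << h2III x >>) p.
(by rewrite sig3E -lin_fB; apply: eq_lin => -[k' w']).
have e1 := lin_inj_coef p (k, w) h1III_inj.
have E : h2III (k + 1, w) = k :: w by rewrite /h2III /= addrK.
have e2 := lin_inj_coef p (k + 1, w) h2III_inj; rewrite E in e2.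
(rewrite -e1 -e2). exact: mcoeffB.
Qed.

Lemma sig3_inj0 p : sig3 p = 0 -> p = 0.
Proof.
move=> h; apply/malgP => -[k w]; rewrite mcoeff0.
have step m : p@_(k, w) = p@_(k + m%:Z, w).
  elim: m => [|m IH]; first by rewrite addr0.
  rewrite IH; have := sig3_coef p (k + m%:Z) w; rewrite h mcoeff0 => /eqP.
  rewrite eq_sym subr_eq0 => /eqP ->.
(by congr (p@_(_, w)); lia).
set N := (\max_(x <- msupp p) `|x.1|%N)%N.
rewrite (step (N + `|k|%N).+1) mcoeff_outdom //.
apply/negP => hin.
have hin' : (k + (N + `|k|%N).+1%:Z, w) \in (msupp p : seq _) by [].
have := @leq_bigmax_seq _ _ xpredT (fun x : int * seq int => `|x.1|%N) _ hin' isT.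
rewrite -/N /=. lia.
Qed.

Lemma sig3_inj : injective sig3.
Proof. exact: transfer_inj islin_sig3 sig3_inj0. Qed.

Lemma stIII_comm : commutative stuffleIII.
Proof.
apply: (transfer_comm sig3_inj sig3_hom).
(by have := stB_comm; rewrite /stuffleB sstE).
Qed.

Lemma stIII_assoc : associative stuffleIII.
Proof.
apply: (transfer_assoc sig3_inj sig3_hom).
(by have := stB_assoc; rewrite /stuffleB sstE).
Qed.

Definition sig4x (x : option (letI * seq nat)) : QA (seq nat) :=
  match x with
  | None => << [::] >>
  | Some (thetaI, w) => << 1%N :: w >>
  | Some (zS n, w) => sigma_plus n w
  end.

Fact sig4_key : unit. Proof. by []. Qed.
Definition sig4 : AIV -> QA (seq nat) := locked_with sig4_key (lin sig4x).
Lemma sig4E : sig4 = lin sig4x. Proof. by rewrite /sig4 unlock. Qed.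
Lemma islin_sig4 : islin sig4.
Proof. rewrite sig4E; exact: islin_lin. Qed.
Lemma sig4U x : sig4 << x >> = sig4x x.
Proof. by rewrite sig4E linU. Qed.

Definition Pl (a : letI) : QA nat :=
  match a with thetaI => << 1%N >> | zS n => << n.+1 >> + << n >> end.

Lemma sig4xE a w : sig4x (Some (a, w)) = preL (Pl a) << w >>.
Proof. by case: a => [|n] /=; rewrite ?preLDl !preLU !preU. Qed.

Lemma sigma_plusE n w : sigma_plus n w = preL (Pl (zS n)) << w >>.
Proof. exact: (sig4xE (zS n) w). Qed.

Lemma theta_wordE w : << 1%N :: w >> = preL (Pl thetaI) << w >> :> QA (seq nat).
Proof. exact: (sig4xE thetaI w). Qed.

Lemma islin_preIV a : islin (preIV a).
Proof. exact: islin_lin. Qed.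

Lemma sig4_pre a M : sig4 (preIV a M) = preL (Pl a) M.
Proof.
apply: (lin_ext (F := fun M => sig4 (preIV a M)) (G := preL (Pl a))).
- exact: islin_comp islin_sig4 (islin_preIV a).
- exact: islin_preLr.
- by move=> w; rewrite /preIV linU sig4U sig4xE.
Qed.


Lemma stC_comm : commutative (sst brN).
Proof. exact: sst_comm brN_comm. Qed.

Lemma sig4_zt k u v :
  sig4 (preIV (zS k) (stuffleC << u >> << 1%N :: v >>)
      + preIV thetaI (stuffleC (sigma_plus k u) << v >>)
      + preIV (zS k.+1) (stuffleC << u >> << v >>))
  = (sst brN) (sig4x (Some (zS k, u))) (sig4x (Some (thetaI, v))).
Proof.
rewrite !(islinD _ _ islin_sig4) /stuffleC -(sstE brN).
rewrite {1}(sig4_pre (zS k)) {1}(sig4_pre thetaI) {1}(sig4_pre (zS k.+1)).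
rewrite !sig4xE KF {1}(sigma_plusE k u) {1}(theta_wordE v).
congr (_ + _).
congr (preL _ _).
by rewrite /Pl brpDl !brpU !brlN !addn1.
Qed.

Lemma sig4_zz k u l v :
  sig4 (preIV (zS k) (stuffleC << u >> (sigma_plus l v))
      + preIV (zS l) (stuffleC (sigma_plus k u) << v >>)
      + (preIV (zS (k + l).+1) (stuffleC << u >> << v >>)
         + preIV (zS (k + l)) (stuffleC << u >> << v >>)))
  = (sst brN) (sig4x (Some (zS k, u))) (sig4x (Some (zS l, v))).
Proof.
have H : forall a1 a2 a3 a4 : AIV, sig4 (a1 + a2 + (a3 + a4)) = sig4 a1 + sig4 a2 + (sig4 a3 + sig4 a4).
  by move=> a1 a2 a3 a4; rewrite !(islinD _ _ islin_sig4).
rewrite H /stuffleC -(sstE brN).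
rewrite {1}(sig4_pre (zS k)) {1}(sig4_pre (zS l)) {1}(sig4_pre (zS (k + l).+1)) {1}(sig4_pre (zS (k + l))).
rewrite !sig4xE KF {1}(sigma_plusE l v) {1}(sigma_plusE k u).
congr (_ + _).
rewrite -preLDl; congr (preL _ _).
rewrite /Pl brpDl !brpDr !brpU !brlN.
by rewrite !addSn !addnS.
Qed.

Lemma sig4_basis x y : sig4 (stIV_basis x y) = (sst brN) (sig4 << x >>) (sig4 << y >>).
Proof.
rewrite !sig4U.
case: x => [[[|k] u]|]; last by rewrite /= sig4U st1l.
- case: y => [[[|l] v]|]; last by rewrite /= sig4U st1r.
  +
    rewrite /stIV_basis !(islinD _ _ islin_sig4) !(islinN _ islin_sig4) /stuffleC -(sstE brN).
    rewrite {1}(sig4_pre thetaI) {1}(sig4_pre thetaI) {1}(sig4_pre (zS 1)) {1}(sig4_pre thetaI).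
    rewrite !sig4xE KF -{1}(theta_wordE v) -{1}(theta_wordE u).
    congr (_ + _).
    by rewrite /Pl brpU brlN preLDl addrK.
  +
    rewrite stC_comm -sig4_zt.
    by [].
- case: y => [[[|l] v]|]; last by rewrite /= sig4U st1r.
  + exact: sig4_zt.
  + exact: sig4_zz.
Qed.

Lemma sig4_hom p q : sig4 (stuffleIV p q) = (sst brN) (sig4 p) (sig4 q).
Proof.
apply: (lin_ext (F := fun p => sig4 (stuffleIV p q)) (G := fun p => (sst brN) (sig4 p) (sig4 q))).
- exact: islin_comp islin_sig4 (islin_bilinl _ _).
- exact: islin_comp (islin_stl _ _) islin_sig4.
move=> x.
apply: (lin_ext (F := fun q => sig4 (stuffleIV << x >> q)) (G := fun q => (sst brN) (sig4 << x >>) (sig4 q))).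
- exact: islin_comp islin_sig4 (islin_bilinr _ _).
- exact: islin_comp (islin_str _ _) islin_sig4.
move=> y; rewrite /stuffleIV bilinU; exact: sig4_basis.
Qed.


Lemma eqS4 (a b : letI) (w w' : seq nat) :
  (Some (a, w') == Some (b, w)) = (a == b) && (w' == w).
Proof. by []. Qed.
Lemma eqI_tz n : (thetaI == zS n) = false. Proof. by []. Qed.
Lemma eqI_zt n : (zS n == thetaI) = false. Proof. by []. Qed.
Lemma eqI_tt : (thetaI == thetaI) = true. Proof. by []. Qed.
Lemma eqI_zz n m : (zS n == zS m) = (n == m). Proof. by []. Qed.

Lemma sig4x_coef x m w : (sig4x x)@_(m :: w) =
  ((x == Some (thetaI, w)) && (m == 1%N))%:R + (x == Some (zS m, w))%:R
  + ((x == Some (zS m.-1, w)) && (0 < m)%N)%:R.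
Proof.
case: x => [[[|n] w']|].
- rewrite /sig4x mcoeffU eqseq_cons !eqS4 eqI_tt !eqI_tz /= !addr0 [1%N == m]eq_sym andbC.
  by [].
- rewrite /sig4x /sigma_plus mcoeffD !mcoeffU !eqseq_cons !eqS4 eqI_zt !eqI_zz /= add0r addrC.
  by case: m => [|m] /=; rewrite ?andbF ?eqSS ?andbT.
- by rewrite /sig4x mcoeffU /= !addr0.
Qed.

Lemma sig4x_coef_nil x : (sig4x x)@_[::] = (x == None)%:R.
Proof.
case: x => [[[|n] w']|].
- by rewrite /sig4x mcoeffU.
- by rewrite /sig4x /sigma_plus mcoeffD !mcoeffU /= addr0.
- by rewrite /sig4x mcoeffU.
Qed.

Lemma sum_delta_b (K : choiceType) (p : QA K) a (b : bool) :
  \sum_(x <- msupp p) p@_x * ((x == a) && b)%:R = b%:R * p@_a.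
Proof.
case: b.
- rewrite mul1r -sum_delta; apply: eq_bigr => x _; by rewrite andbT mulr_natr.
- by rewrite mul0r big1 // => x _; rewrite andbF mulr0.
Qed.

Lemma sig4_coef p m w : (sig4 p)@_(m :: w) =
  (m == 1%N)%:R * p@_(Some (thetaI, w)) + p@_(Some (zS m, w))
  + (0 < m)%N%:R * p@_(Some (zS m.-1, w)).
Proof.
rewrite sig4E lin_coef.
rewrite (eq_bigr (fun x => p@_x * ((x == Some (thetaI, w)) && (m == 1%N))%:R
   + p@_x * ((x == Some (zS m, w)) && true)%:R
   + p@_x * ((x == Some (zS m.-1, w)) && (0 < m)%N)%:R)); last first.
  by move=> x _; rewrite sig4x_coef andbT !mulrDr.
by rewrite !big_split /= !sum_delta_b mul1r.
Qed.

Lemma sig4_coef_nil p : (sig4 p)@_[::] = p@_None.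
Proof.
rewrite sig4E lin_coef.
rewrite (eq_bigr (fun x => p@_x * ((x == None) && true)%:R)); last first.
  by move=> x _; rewrite sig4x_coef_nil andbT.
by rewrite sum_delta_b mul1r.
Qed.

Definition code4 (x : option (letI * seq nat)) : nat :=
  match x with Some (zS n, _) => n | _ => 0%N end.

Lemma sig4_inj0 p : sig4 p = 0 -> p = 0.
Proof.
move=> h.
have hc m w : (m == 1%N)%:R * p@_(Some (thetaI, w)) + p@_(Some (zS m, w))
  + (0 < m)%N%:R * p@_(Some (zS m.-1, w)) = 0.
  by rewrite -sig4_coef h mcoeff0.
have z0 w : p@_(Some (zS 0, w)) = 0.
  by have := hc 0%N w; rewrite !mul0r add0r addr0.
have zs j w : p@_(Some (zS j.+2, w)) + p@_(Some (zS j.+1, w)) = 0.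
  by have := hc j.+2 w; rewrite mul0r add0r mul1r.
have zpos w i : forall j, p@_(Some (zS (j.+1 + i), w)) = 0 -> p@_(Some (zS j.+1, w)) = 0.
  elim: i => [|i IH] j; first by rewrite addn0.
  rewrite addnS -addSn => /IH e.
  by have := zs j w; rewrite e add0r.
set N := (\max_(x <- msupp p) code4 x)%N.
have zall j w : p@_(Some (zS j.+1, w)) = 0.
  apply: (zpos w N.+1 j); apply: mcoeff_outdom; apply/negP => hin.
  have hin' : Some (zS (j.+1 + N.+1), w) \in (msupp p : seq _) by [].
  have := @leq_bigmax_seq _ _ xpredT code4 _ hin' isT.
  by rewrite -/N /=; lia.
have t0 w : p@_(Some (thetaI, w)) = 0.
  by have := hc 1%N w; rewrite mul1r zall z0 mulr0 !addr0.
apply/malgP => x; rewrite mcoeff0.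
case: x => [[[|[|n]] w]|].
- exact: t0.
- exact: z0.
- exact: zall.
- by rewrite -sig4_coef_nil h mcoeff0.
Qed.

Lemma sig4_inj : injective sig4.
Proof. exact: transfer_inj islin_sig4 sig4_inj0. Qed.

Lemma stIV_comm : commutative stuffleIV.
Proof. exact: (transfer_comm sig4_inj sig4_hom stC_comm). Qed.

Lemma stIV_assoc : associative stuffleIV.
Proof. exact: (transfer_assoc sig4_inj sig4_hom (sst_assoc brN_assoc)). Qed.

Theorem proposition4p6 :
  (commutative stuffleI /\ associative stuffleI) /\
  (commutative stuffleII /\ associative stuffleII) /\
  (commutative stuffleIII /\ associative stuffleIII) /\
  (commutative stuffleIV /\ associative stuffleIV).
Proof.
split; first by split; [exact: stI_comm | exact: stI_assoc].
split; first by split; [exact: stN_comm | exact: stN_assoc].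
split; first by split; [exact: stIII_comm | exact: stIII_assoc].
by split; [exact: stIV_comm | exact: stIV_assoc].
Qed.
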